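(* Let $k\in\{1,\dots,N-1\}$. For every integer $m\ge1$ with $m\le (N-k)/2$, $$Z^{2m-1}|0_k\rangle=\prod_{j=0}^{m-1}\Big(\frac{n_{k+2j+1}}{n_{k+2j}}\Big)^{1/2}\varphi_{0_{k+2m-1}},\qquad Z^{2m}|0_k\rangle=\prod_{j=0}^{m-1}\Big(\frac{n_{k+2j+1}}{n_{k+2j}}\Big)^{1/2}|0_{k+2m}\rangle.$$
   Context: Fix $N\ge2$ and integers $n_1\ge n_2\ge\dots\ge n_N\ge1$. Let $\mathcal H=\bigoplus_{k=1}^N E_k$ where $E_k$ has orthonormal basis $\{|a_k\rangle:0\le a\le n_k-1\}$. For vectors $x,y$, $|x\rangle\langle y|$ is the operator $u\mapsto\langle y,u\rangle x$. $\zeta_k=e^{2\pi i/n_k}$, $\varphi_{a_k}=n_k^{-1/2}\sum_{b=0}^{n_k-1}\zeta_k^{-ba}|b_k\rangle$. For $1\le k\le N-1$, $Z_k=n_k^{-1/2}\sum_{b=0}^{n_{k+1}-1}\sum_{a=0}^{n_k-1}\zeta_k^{ba}|b_{k+1}\rangle\langle a_k|$, and the transport operator is $Z=\sum_{k=1}^{N-1}Z_k$ (acting on $\mathcal H$, equal to $Z_k$ on $E_k$ and zero on $E_N$). *)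

(* Defs.v *)
From HB Require Import structures.
From mathcomp Require Import all_boot all_order all_algebra.
From mathcomp Require Import all_classical all_reals all_analysis.
From mathcomp Require Import complex.
Set Implicit Arguments. Unset Strict Implicit. Unset Printing Implicit Defensive.
Import Order.TTheory GRing.Theory Num.Theory.
Local Open Scope ring_scope.

(* A vector of H = (+)_{k=1}^N E_k is represented by its coordinates
   v k a = <a_k, v> in the orthonormal basis {|a_k>}; indices k are
   1-based as in the paper (1 <= k <= N, 0 <= a <= n_k - 1). *)
Definition vec (R : realType) := nat -> nat -> R[i].

Definition zeta (R : realType) (nk : nat) : R[i] :=
  Complex (cos (2 * pi / nk%:R)) (sin (2 * pi / nk%:R)).

Definition ket (R : realType) (k a : nat) : vec R :=
  fun k' b => if (k' == k) && (b == a) then 1 else 0.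

Definition isqrtn (R : realType) (nk : nat) : R[i] :=
  ((Num.sqrt (nk%:R : R))^-1)%:C%C.

Definition vscale (R : realType) (c : R[i]) (v : vec R) : vec R :=
  fun k' b => c * v k' b.

Definition phi (R : realType) (n : nat -> nat) (k a : nat) : vec R :=
  fun k' b' => \sum_(b < n k)
    isqrtn R (n k) * (zeta R (n k)) ^- (b * a) * ket R k b k' b'.

(* Z_k = n_k^{-1/2} sum_{b<n_{k+1}} sum_{a<n_k} zeta_k^{ba} |b_{k+1}><a_k|,
   applied to v: |x><y| u = <y,u> x, and <a_k, v> = v k a. *)
Definition Zk (R : realType) (n : nat -> nat) (k : nat) (v : vec R) : vec R :=
  fun k' b' => \sum_(b < n k.+1) \sum_(a < n k)
    isqrtn R (n k) * (zeta R (n k)) ^+ (b * a) * v k a * ket R k.+1 b k' b'.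

Definition Zop (R : realType) (N : nat) (n : nat -> nat) (v : vec R) : vec R :=
  fun k' b' => \sum_(1 <= k < N) Zk n k v k' b'.

(* Main.v *)
Require Import Defs.
From HB Require Import structures.
From mathcomp Require Import all_boot all_order all_algebra.
From mathcomp Require Import all_classical all_reals all_analysis.
From mathcomp Require Import complex.
From mathcomp Require Import zify ring.
Import Order.TTheory GRing.Theory Num.Theory.
Local Open Scope ring_scope.

Section Helpers.
Variable R : realType.

Definition ex (x : R) : R[i] := Complex (cos x) (sin x).
Lemma exD x y : ex x * ex y = ex (x + y).
Proof. rewrite /ex cosD sinD. by apply/eqP; simpc; rewrite [sin x * _ + _]addrC. Qed.
Lemma exX x b : ex x ^+ b = ex (x *+ b).
Proof. elim: b => [|b IH]; first by rewrite expr0 mulr0n /ex cos0 sin0.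
by rewrite exprS IH exD mulrS. Qed.
Lemma ex2pi : ex (pi *+ 2) = 1.
Proof. by rewrite /ex cos2pi sin2pi. Qed.
Lemma ex_ne1 y : 0 < y < pi *+ 2 -> ex y != 1.
Proof.
move=> /andP[y0 y2]; apply/negP => /eqP e.
have : ex (y / 2) ^+ 2 = 1 by rewrite exX mulr2n -splitr.
move/eqP; rewrite sqrf_eq1 => /orP[] /eqP [_ hs].
  have : 0 < sin (y/2) by apply: sin_gt0_pi; rewrite divr_gt0 //= ltr_pdivrMr // mulr_natr.
  by rewrite hs ltxx.
have : 0 < sin (y/2) by apply: sin_gt0_pi; rewrite divr_gt0 //= ltr_pdivrMr // mulr_natr.
by rewrite hs oppr0 ltxx.
Qed.

Lemma zetaX (nk b : nat) : zeta R nk ^+ b = ex ((2 * pi / nk%:R) *+ b).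
Proof. by rewrite -exX. Qed.

Lemma geom (nk b : nat) : (0 < nk)%N -> (b < nk)%N ->
  \sum_(a < nk) zeta R nk ^+ (b * a) = if b == 0%N then nk%:R else 0.
Proof.
move=> nk0 bnk; case: eqP => [->|/eqP b0].
  under eq_bigr do rewrite mul0n expr0.
  by rewrite sumr_const card_ord.
under eq_bigr do rewrite exprM.
set z := zeta R nk ^+ b.
have zn : z ^+ nk = 1.
  rewrite /z -exprM mulnC exprM zetaX -mulr_natr divfK ?pnatr_eq0 -?lt0n //.
  by rewrite mulr_natl ex2pi expr1n.
have z1 : z != 1.
  have pn : (0 : R) < nk%:R by rewrite ltr0n.
  rewrite /z zetaX.
  have -> : (2 * (pi : R) / nk%:R) *+ b = (2 * pi) * (b%:R / nk%:R).
    by rewrite -mulr_natr mulrAC -mulrA.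
  apply: ex_ne1; apply/andP; split.
    apply: mulr_gt0; first by apply: mulr_gt0; [rewrite ltr0n | exact: pi_gt0].
    by apply: divr_gt0 => //; rewrite ltr0n lt0n.
  rewrite -[pi *+ 2]mulr_natl gtr_pMr; last by apply: mulr_gt0; [rewrite ltr0n | exact: pi_gt0].
  by rewrite ltr_pdivrMr // mul1r ltr_nat.
have := subrX1 z nk; rewrite zn subrr => /esym/eqP; rewrite mulf_eq0 subr_eq0 (negbTE z1) /=.
by move/eqP.
Qed.

Lemma sum_if_eq (G : nat -> R[i]) i nn :
  \sum_(b < nn) (if b == i :> nat then G b else 0) = if (i < nn)%N then G i else 0.
Proof. by rewrite -big_mkcond /= big_ord1_eq. Qed.

Lemma mul_if1 (x : R[i]) (c : bool) : x * (if c then 1 else 0) = if c then x else 0.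
Proof. by case: c; rewrite ?mulr1 ?mulr0. Qed.

Lemma Zk_eq (n : nat -> nat) j (v : vec R) k' b' :
  Zk n j v k' b' = if (k' == j.+1) && (b' < n j.+1)%N then
     \sum_(a < n j) isqrtn R (n j) * zeta R (n j) ^+ (b' * a) * v j a else 0.
Proof.
rewrite /Zk /ket.
under eq_bigr do rewrite -big_distrl /=.
case: (eqVneq k' j.+1) => [_|ne] /=; last first.
  by rewrite big1 // => b _; rewrite mulr0.
under eq_bigr do rewrite mul_if1 eq_sym.
by rewrite (sum_if_eq (fun b => \sum_(a < n j) isqrtn R (n j) * zeta R (n j) ^+ (b * a) * v j a)).
Qed.

Lemma Zop_eq N (n : nat -> nat) (v : vec R) k' b' :
  Zop N n v k' b' = if (2 <= k' <= N)%N && (b' < n k')%N then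
     \sum_(a < n k'.-1) isqrtn R (n k'.-1) * zeta R (n k'.-1) ^+ (b' * a) * v k'.-1 a
     else 0.
Proof.
rewrite /Zop; under eq_bigr do rewrite Zk_eq.
case: k' => [|k] /=.
  by rewrite big1.
under eq_bigr do rewrite eqSS.
rewrite -big_mkcond /=.
under eq_bigl do rewrite andbC eq_sym.
rewrite big_nat1_cond_eq.
by rewrite ltnS.
Qed.

Lemma phi_eq (n : nat -> nat) j a k' b' :
  phi R n j a k' b' = if (k' == j) && (b' < n j)%N then
    isqrtn R (n j) * zeta R (n j) ^- (b' * a) else 0.
Proof.
rewrite /phi /ket; case: (eqVneq k' j) => [_|ne] /=; last first.
  by rewrite big1 // => b _; rewrite mulr0.
under eq_bigr do rewrite mul_if1 eq_sym.
by rewrite (sum_if_eq (fun b => isqrtn R (n j) * zeta R (n j) ^- (b * a))).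
Qed.


Lemma isq_sq (m : nat) : (0 < m)%N -> isqrtn R m * isqrtn R m * m%:R = 1.
Proof.
move=> m0; rewrite /isqrtn -(rmorph_nat (real_complex R)) -!rmorphM.
rewrite -invfM -expr2 sqr_sqrtr ?ler0n // mulVf ?pnatr_eq0 -?lt0n //.
Qed.

Lemma isq_ratio (a b : nat) : (0 < a)%N -> (0 < b)%N ->
  isqrtn R b = (Num.sqrt (a%:R / b%:R : R))%:C%C * isqrtn R a.
Proof.
move=> a0 b0; rewrite /isqrtn -rmorphM; congr (_%:C)%C.
rewrite sqrtrM ?ler0n // sqrtrV ?ler0n // mulrAC mulfV ?mul1r //.
by rewrite sqrtr_eq0 -ltNge ltr0n.
Qed.

Lemma vscaleA c d (v : vec R) : vscale c (vscale d v) = vscale (c * d) v.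
Proof. by apply: funext => k'; apply: funext => b'; rewrite /vscale mulrA. Qed.

Lemma vscale1 (v : vec R) : vscale 1 v = v.
Proof. by apply: funext => k'; apply: funext => b'; rewrite /vscale mul1r. Qed.

Lemma Zop_scale N n c (v : vec R) : Zop N n (vscale c v) = vscale c (Zop N n v).
Proof.
apply: funext => k'; apply: funext => b'; rewrite /vscale !Zop_eq.
case: ifP => _; last by rewrite mulr0.
rewrite mulr_sumr; apply: eq_bigr => a _; ring.
Qed.

Lemma stepA N n j : (1 <= j)%N -> (j < N)%N -> (0 < n j)%N -> (0 < n j.+1)%N ->
  Zop N n (ket R j 0) =
  vscale (Num.sqrt ((n j.+1)%:R / (n j)%:R : R))%:C%C (phi R n j.+1 0).
Proof.
move=> j1 jN nj nj1; apply: funext => k'; apply: funext => b'.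
rewrite Zop_eq /vscale phi_eq.
case: k' => [|k]; first by rewrite mulr0.
rewrite /= eqSS.
case: (eqVneq k j) => [->|ne] /=.
  have -> : (1 < j.+1 <= N)%N by rewrite ltnS j1.
  rewrite /=; case: ifP => hb; last by rewrite mulr0.
  rewrite /ket; under eq_bigr do rewrite eqxx /= mul_if1.
  rewrite (sum_if_eq (fun i => isqrtn R (n j) * zeta R (n j) ^+ (b' * i))) nj muln0 expr0 mulr1 invr1 mulr1.
  exact: isq_ratio.
rewrite mulr0; case: ifP => // _; apply: big1 => a _.
by rewrite /ket (negbTE ne) /= mulr0.
Qed.

Lemma stepB N n j : (1 <= j)%N -> (j < N)%N -> (0 < n j.+1)%N -> (n j.+1 <= n j)%N ->
  Zop N n (phi R n j 0) = ket R j.+1 0.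
Proof.
move=> j1 jN nj1 hle; apply: funext => k'; apply: funext => b'.
rewrite Zop_eq /ket.
case: k' => [|k]; first by [].
rewrite /= eqSS.
case: (eqVneq k j) => [->|ne] /=.
  have -> : (1 < j.+1 <= N)%N by rewrite ltnS j1.
  rewrite /=; case: ifP => hb.
    under eq_bigr do rewrite phi_eq eqxx ltn_ord /= muln0 expr0 invr1 mulr1 mulrAC.
    rewrite -mulr_sumr geom ?(leq_trans hb hle) //; last first.
      exact: leq_trans nj1 hle.
    case: (b' == 0%N); last by rewrite mulr0.
    by rewrite isq_sq // (leq_trans nj1 hle).
  case: eqP => // b0; move: hb; rewrite b0 nj1 //.
case: ifP => // _; apply: big1 => a _.
by rewrite phi_eq (negbTE ne) /= mulr0.
Qed.

End Helpers.

Lemma npos_lem (N : nat) (n : nat -> nat)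
  (hmono : forall i : nat, (1 <= i)%N -> (i < N)%N -> (n i.+1 <= n i)%N)
  (hpos : (1 <= n N)%N) i : (1 <= i)%N -> (i <= N)%N -> (0 < n i)%N.
Proof.
have H : forall d, (d <= N - 1)%N -> (0 < n (N - d))%N.
  elim => [|d IH] hd; first by rewrite subn0.
  have e : (N - d = (N - d.+1).+1)%N by lia.
  apply: leq_trans (IH (ltnW hd)) _; rewrite e; apply: hmono; lia.
move=> i1 iN; have -> : i = (N - (N - i))%N by lia.
apply: H; lia.
Qed.

Lemma even_step (R : realType) (N : nat) (n : nat -> nat)
  (hmono : forall i : nat, (1 <= i)%N -> (i < N)%N -> (n i.+1 <= n i)%N)
  (hpos : (1 <= n N)%N) (k : nat) (hk1 : (1 <= k)%N) m :
  (k + 2 * m <= N)%N ->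
  iter (2 * m) (Zop N n) (ket R k 0) =
  vscale (\prod_(j < m) Num.sqrt ((n (k + 2 * j + 1)%N)%:R / (n (k + 2 * j)%N)%:R : R))%:C%C
    (ket R (k + 2 * m) 0).
Proof.
have np := @npos_lem N n hmono hpos.
elim: m => [|m IH] hm.
  by rewrite muln0 addn0 big_ord0 vscale1.
rewrite mulnS /= IH; last by lia.
set j := (k + 2 * m)%N.
rewrite Zop_scale stepA; first last.
- apply: np; lia.
- apply: np; lia.
- lia.
- lia.
rewrite Zop_scale Zop_scale stepB; first last.
- apply: hmono; lia.
- apply: np; lia.
- lia.
- lia.
rewrite !vscaleA big_ord_recr /= rmorphM.
rewrite addn1; congr (vscale _ (ket R _ 0)); rewrite /j; lia.
Qed.

Theorem corollary2p11 (R : realType) (N : nat) (n : nat -> nat)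
  (hN : (2 <= N)%N)
  (hmono : forall i : nat, (1 <= i)%N -> (i < N)%N -> (n i.+1 <= n i)%N)
  (hpos : (1 <= n N)%N)
  (k : nat) (hk1 : (1 <= k)%N) (hk2 : (k <= N - 1)%N)
  (m : nat) (hm1 : (1 <= m)%N) (hm2 : (2 * m <= N - k)%N) :
  let c : R[i] :=
    (\prod_(j < m) Num.sqrt ((n (k + 2 * j + 1)%N)%:R / (n (k + 2 * j)%N)%:R : R))%:C%C in
  iter (2 * m - 1) (Zop N n) (ket R k 0) = vscale c (phi R n (k + 2 * m - 1) 0) /\
  iter (2 * m) (Zop N n) (ket R k 0) = vscale c (ket R (k + 2 * m) 0).
Proof.
move=> c; split; last by apply: even_step => //; lia.
have np := @npos_lem N n hmono hpos.
case: m hm1 hm2 @c => [//|m] _ hm2 c.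
have -> : (2 * m.+1 - 1 = (2 * m).+1)%N by lia.
rewrite /= even_step //; last by lia.
set j := (k + 2 * m)%N.
rewrite Zop_scale stepA; first last.
- apply: np; lia.
- apply: np; lia.
- lia.
- lia.
rewrite vscaleA /c big_ord_recr /= rmorphM.
have -> : (k + 2 * m.+1 - 1 = j.+1)%N by rewrite /j; lia.
by rewrite addn1.
Qed.
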